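(* Let $p$ be a prime and $c_1,\dots,c_n$ distinct nonzero integers. Let $M(c_1,\dots,c_n)$ be the $n\times n$ matrix whose $(k,i)$ entry is $c_i^{p^{k-1}}$ ($k,i=1,\dots,n$). Then the columns of $M(c_1,\dots,c_n)$ are $\mathbb Z$-linearly independent in each of the following cases: (1) all $c_i$ are positive; (2) $p\neq2$ and the $|c_i|$ are distinct, i.e. $c_i\ne -c_j$ for all $i\ne j$. *)

(* Defs.v *)
From mathcomp Require Import all_boot all_order all_algebra.
Set Implicit Arguments. Unset Strict Implicit. Unset Printing Implicit Defensive.
Import GRing.Theory Num.Theory.
Local Open Scope ring_scope.

(* M(c_1,...,c_n): entry in row k, column i (0-indexed) is c_i ^ (p ^ k),
   i.e. the paper's (k,i) entry c_i^{p^{k-1}} with 1-indexing. *)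
Definition Mfrob (p n : nat) (c : 'I_n -> int) : 'M[int]_n :=
  \matrix_(k < n, i < n) c i ^+ (p ^ k)%N.

Definition cols_Z_indep (n : nat) (A : 'M[int]_n) : Prop :=
  forall a : 'cV[int]_n, A *m a = 0 -> a = 0.

(* Main.v *)
Require Import Defs.
From mathcomp Require Import all_boot all_order all_algebra.
From mathcomp Require Import polyrcf realalg.
Set Implicit Arguments. Unset Strict Implicit. Unset Printing Implicit Defensive.
Import GRing.Theory Num.Theory.
Local Open Scope ring_scope.
Import Order.TTheory.
Section Desc.
Variable R : rcfType.

Definition nzc (q : {poly R}) := count (fun i => q`_i != 0) (iota 0 (size q)).

Lemma nzcE (q : {poly R}) N : (size q <= N)%N -> nzc q = count (fun i => q`_i != 0) (iota 0 N).
Proof.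
move=> hN; rewrite /nzc -(subnKC hN) iotaD count_cat add0n.
rewrite (@eq_in_count _ _ pred0 (iota (size q) _)) ?count_pred0 ?addn0 //.
by move=> i; rewrite mem_iota => /andP[hi _] /=; rewrite nth_default ?eqxx.
Qed.

Lemma count_iotaS (P : pred nat) N :
  count P (iota 0 N.+1) = (P 0%N + count (fun i => P i.+1) (iota 0 N))%N.
Proof. by rewrite /= (iotaDl 1 0) count_map. Qed.

Lemma nzc_gt0 (q : {poly R}) : q != 0 -> (0 < nzc q)%N.
Proof.
move=> q0; rewrite /nzc -has_count; apply/hasP; exists (size q).-1.
  by rewrite mem_iota add0n /= prednK ?leqnn // size_poly_gt0.
by rewrite -lead_coefE lead_coef_eq0.
Qed.

Lemma rolle_list (q : {poly R}) x s : path <%R x s -> all (root q) (x :: s) ->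
  exists ts, [/\ size ts = size s, sorted <%R ts, all (fun t => x < t) ts
             & all (root q^`()) ts].
Proof.
elim: s x => [|y s IH] x /=; first by exists [::].
move=> /andP[xy ps] /and3P[rx ry rs].
have [ts [hs srt allt rts]] : _ := IH y ps (introT andP (conj ry rs)).
have [c hcin hc] := poly_rolle xy (etrans (eqP rx) (esym (eqP ry))).
move: hcin; rewrite in_itv /= => /andP[hxc hcy].
exists (c :: ts); split => //=.
- by rewrite hs.
- rewrite path_sortedE; last exact: lt_trans.
  rewrite srt andbT; apply/allP => t ht; apply: lt_trans hcy _.
  by move/allP: allt; apply.
- rewrite hxc /=; apply/allP => t ht; apply: lt_trans (lt_trans hxc hcy) _.
  by move/allP: allt; apply.
- by rewrite /root hc eqxx.
Qed.

Lemma descartes (q : {poly R}) (rs : seq R) :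
  q != 0 -> sorted <%R rs -> all (fun x => 0 < x) rs -> all (root q) rs ->
  (size rs < nzc q)%N.
Proof.
move: {2}(size q).+1 (ltnSn (size q)) => N.
elim: N q rs => [|N IH] q rs //; rewrite ltnS => hsz q0 srt pos rts.
case: rs srt pos rts => [|x rs] srt pos rts; first exact: nzc_gt0.
have hx0 : 0 < x by case/andP: pos.
have [c0|c0] := eqVneq q`_0 0.
  pose r := drop_poly 1 q.
  have qE : q = r * 'X.
    rewrite -{1}(poly_take_drop 1 q) expr1.
    suff -> : take_poly 1 q = 0 by rewrite add0r.
    apply/polyP => i; rewrite coef_take_poly coef0.
    by case: i => [|i] //=; rewrite c0.
  have r0 : r != 0 by apply: contraNneq q0; rewrite qE => ->; rewrite mul0r.
  have szq : size q = (size r).+1 by rewrite qE size_mulX.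
  have -> : nzc q = nzc r.
    rewrite /nzc szq count_iotaS qE coefMX eqxx /=.
    by rewrite eqxx add0n; apply: eq_count => i; rewrite coefMX.
  apply: IH => //; first by rewrite -ltnS -szq.
  apply/allP => y hy; move/allP: rts => /(_ y hy); rewrite qE /root hornerMX.
  rewrite mulf_eq0 => /orP[//|/eqP y0].
  by move/allP: pos => /(_ y hy); rewrite y0 ltxx.
pose r := q^`().
have szq : (0 < size q)%N by rewrite size_poly_gt0.
have hr : (size r <= (size q).-1)%N by rewrite -ltnS prednK // lt_size_deriv.
have [ts [hs srt' allt rts']] := rolle_list srt rts.
have r0 : r != 0.
  apply/eqP => r0.
  have h1 : (1 < size q)%N by apply: (@root_size_gt1 _ x) => //; case/andP: rts.
  have e : ((size q).-2.+1 = (size q).-1)%N by case: (size q) h1 => [|[|m]].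
  have /eqP := congr1 (fun p : {poly R} => p`_(size q).-2) r0.
  rewrite /= coef_deriv coef0 mulrn_eq0 e => /orP[/eqP h|].
    by move: h1; rewrite -(prednK szq) h.
  by rewrite -lead_coefE lead_coef_eq0 (negPf q0).
have -> : nzc q = (nzc r).+1.
  rewrite (nzcE hr) /nzc -{1}(prednK szq) count_iotaS c0 /= add1n.
  by congr _.+1; apply: eq_count => i; rewrite coef_deriv mulrn_eq0.
rewrite /= ltnS -hs; apply: IH => //.
- by apply: leq_trans (lt_size_deriv q0) hsz.
- by apply/allP => t ht; apply: lt_trans hx0 _; move/allP: allt; apply.
Qed.
End Desc.

Lemma det_nz (p n : nat) (c : 'I_n -> int)
  (hp : prime p)
  (hnz : forall i, c i != 0)
  (hdist : injective c)
  (hcase : (forall i, 0 < c i) \/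
           (p != 2%N /\ forall i j, i != j -> c i != - c j)) :
  \det (Mfrob p c) != 0.
Proof.
apply/negP => /det0P [v v0 vM0].
pose q : {poly realalg} := \sum_(k < n) (v 0 k)%:~R *: 'X^(p ^ k).
have hp1 : (1 < p)%N := prime_gt1 hp.
have coefq j : q`_j = \sum_(k < n) (v 0 k)%:~R * ((j == p ^ k)%N)%:R.
  by rewrite /q coef_sum; apply: eq_bigr => k _; rewrite coefZ coefXn.
have q0 : q != 0.
  have : [exists k, v 0 k != 0].
    apply: contraNT v0 => /existsPn h; apply/eqP/rowP => k; rewrite mxE.
    by apply/eqP; move: (h k); rewrite negbK.
  case/existsP => k0 hk0.
  apply/eqP => /(congr1 (fun q : {poly realalg} => q`_(p ^ k0))).
  rewrite /= coefq coef0 (bigD1 k0) //= eqxx mulr1 big1 ?addr0.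
    by move/eqP; rewrite intr_eq0 (negPf hk0).
  move=> k hk; rewrite (inj_eq (expnI hp1)).
  by rewrite (_ : (k0 == k :> nat) = false) ?mulr0 // eq_sym; apply/negbTE.
have hcnt : (nzc q <= n)%N.
  rewrite /nzc -size_filter.
  have hsz : size [seq (p ^ k)%N | k : 'I_n <- enum 'I_n] = n.
    by rewrite size_map size_enum_ord.
  rewrite -[X in (_ <= X)%N]hsz.
  apply: uniq_leq_size.
  - by rewrite filter_uniq ?iota_uniq.
  - move=> j; rewrite mem_filter => /andP[hj _].
    have : [exists k : 'I_n, j == p ^ k]%N.
      apply: contraNT hj => /existsPn h; rewrite coefq big1 // => k _.
      by rewrite (negbTE (h k)) mulr0.
    by case/existsP => k /eqP ->; apply: map_f; rewrite mem_enum.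
pose d i := `|c i|.
have heval (x : int) : q.[x%:~R] = (\sum_(k < n) v 0 k * x ^+ (p ^ k))%:~R.
  rewrite /q horner_sum rmorph_sum; apply: eq_bigr => k _.
  by rewrite hornerZ hornerXn rmorphM rmorphXn.
have hroot i : \sum_(k < n) v 0 k * d i ^+ (p ^ k) = 0.
  have h0 : \sum_(k < n) v 0 k * c i ^+ (p ^ k) = 0.
    move: (congr1 (fun m : 'rV[int]_n => m 0 i) vM0); rewrite /= !mxE => h.
    rewrite -[RHS]h; apply: eq_bigr => k _; by rewrite /Mfrob mxE.
  rewrite /d; case: (lerP 0 (c i)) => ci.
    by rewrite ger0_norm.
  rewrite ltr0_norm //.
  case: hcase => [hpos|[hp2 _]].
    by move: (hpos i); rewrite ltNge (ltW ci).
  have op : odd p by case: (even_prime hp) => // h; rewrite h eqxx in hp2.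
  transitivity (- \sum_(k < n) v 0 k * c i ^+ (p ^ k)); last by rewrite h0 oppr0.
  rewrite -sumrN; apply: eq_bigr => k _.
  by rewrite exprNn -signr_odd oddX op orbT expr1 mulN1r mulrN.
pose rs := sort <=%R [seq (d i)%:~R : realalg | i <- enum 'I_n].
have hsrt : sorted <%R rs.
  rewrite sort_lt_sorted map_inj_uniq ?enum_uniq // => i j /intr_inj h.
  move: h; rewrite /d => /eqP; rewrite eqr_norm2 => /orP[/eqP/hdist //|hN].
  case: hcase => [hpos|[_ hne]].
    by have := hpos i; rewrite (eqP hN) oppr_gt0 => /ltW; rewrite leNgt (hpos j).
  by case: (eqVneq i j) => // /hne; rewrite hN.
have hpos : all (fun x => 0 < x) rs.
  apply/allP => y; rewrite mem_sort => /mapP [i _ ->].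
  by rewrite ltr0z /d normr_gt0.
have hrts : all (root q) rs.
  apply/allP => y; rewrite mem_sort => /mapP [i _ ->].
  by rewrite /root heval hroot.
have := descartes q0 hsrt hpos hrts.
rewrite size_sort size_map size_enum_ord => /leq_trans /(_ hcnt).
by rewrite ltnn.
Qed.

Theorem lemma4p1 (p n : nat) (c : 'I_n -> int)
  (hp : prime p)
  (hnz : forall i, c i != 0)
  (hdist : injective c)
  (hcase : (forall i, 0 < c i) \/
           (p != 2%N /\ forall i j, i != j -> c i != - c j)) :
  cols_Z_indep (Mfrob p c).
Proof.
move=> a Ma0; apply/eqP; apply: contraNT (det_nz hp hnz hdist hcase) => a0.
rewrite -det_tr; apply/det0P; exists a^T; first by rewrite trmx_eq0.
by rewrite -trmx_mul Ma0 trmx0.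
Qed.
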